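(* Let $F$ be a DQCNF and let $\varphi, \psi$ be autarkies of $F$. Then the composition $\varphi \circ \psi$ is again an autarky of $F$.
   Context: A DQCNF $F$ consists of a finite set $X$ of universal variables, a finite set $Y$ of existential variables (disjoint from $X$), for each $y \in Y$ a dependency set $D(y) \subseteq X$, and a matrix which is a CNF, i.e. a finite set of clauses over the variables $X \cup Y$. An autarky $\varphi$ of $F$ is a partial assignment that assigns to some set $\mathrm{var}(\varphi) \subseteq Y$ of existential variables boolean functions $\varphi(y)$ depending only on the variables in $D(y)$, such that every clause of $F$ containing a literal whose variable lies in $\mathrm{var}(\varphi)$ becomes a tautology after substituting $\varphi(y)$ for each $y \in \mathrm{var}(\varphi)$, i.e. evaluates to true under every assignment to all universal variables and all existential variables not in $\mathrm{var}(\varphi)$. For partial assignments $\varphi, \psi$ of this kind, the composition $\varphi \circ \psi$ is the partial assignment with $\mathrm{var}(\varphi \circ \psi) = \mathrm{var}(\varphi) \cup \mathrm{var}(\psi)$ which assigns $\psi(y)$ to $y \in \mathrm{var}(\psi)$ and $\varphi(y)$ to $y \in \mathrm{var}(\varphi) \setminus \mathrm{var}(\psi)$. *)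

(* Defs.v *)
From mathcomp Require Import all_boot.
Set Implicit Arguments. Unset Strict Implicit. Unset Printing Implicit Defensive.

(* A literal is a pair (v, b):
   (v, true) is the positive literal v, (v, false) is the negative literal ~v. *)
Definition literal (V : finType) := (V * bool)%type.

Record dqcnf (V : finType) := DQCNF {
  univ : {set V};
  exist : {set V};
  dep : V -> {set V};
  matrix : {set {set literal V}}
}.

Definition wf_dqcnf (V : finType) (F : dqcnf V) : Prop :=
  [disjoint univ F & exist F] /\
  (forall y, y \in exist F -> dep F y \subset univ F) /\
  (forall C, C \in matrix F -> forall l, l \in C -> l.1 \in univ F :|: exist F).

(* A partial assignment: a domain var(phi) and, for each y, a boolean function
   of a total assignment (only meaningful for y in the domain). *)
Record passign (V : finType) := PA {
  pdom : {set V};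
  pfun : V -> (V -> bool) -> bool
}.

Definition is_passign (V : finType) (F : dqcnf V) (phi : passign V) : Prop :=
  pdom phi \subset exist F /\
  (forall y, y \in pdom phi -> forall a a' : V -> bool,
      (forall x, x \in dep F y -> a x = a' x) -> pfun phi y a = pfun phi y a').

Definition subst_val (V : finType) (phi : passign V) (a : V -> bool) (v : V) : bool :=
  if v \in pdom phi then pfun phi v a else a v.

Definition autarky (V : finType) (F : dqcnf V) (phi : passign V) : Prop :=
  is_passign F phi /\
  forall C, C \in matrix F ->
    (exists l, l \in C /\ l.1 \in pdom phi) ->
    forall a : V -> bool, exists l, l \in C /\ subst_val phi a l.1 = l.2.

Definition compose (V : finType) (phi psi : passign V) : passign V :=
  PA (pdom phi :|: pdom psi)
     (fun y => if y \in pdom psi then pfun psi y else pfun phi y).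

(* Main.v *)
Require Import Defs.
From mathcomp Require Import all_boot.

Theorem lemma2 (V : finType) (F : dqcnf V) (phi psi : passign V) :
  wf_dqcnf F -> autarky F phi -> autarky F psi -> autarky F (compose phi psi).
Proof.
move=> [dis [depU _]] [[sphi dphi] aphi] [[spsi dpsi] apsi].
have key : forall a v, subst_val (compose phi psi) a v =
   if v \in pdom psi then subst_val psi (subst_val phi a) v
   else subst_val phi a v.
  move=> a v; rewrite /subst_val /compose /= in_setU.
  case Hv: (v \in pdom psi); last by rewrite orbF.
  rewrite orbT; apply: dpsi => // x Hx.
  have xU : x \in univ F by apply: (subsetP (depU v (subsetP spsi v Hv))).
  case Hx2: (x \in pdom phi) => //.
  have : x \in exist F by apply: (subsetP sphi).
  by rewrite (disjointFr dis xU).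
split.
  split.
    by rewrite /compose /=; apply/subsetP => v; rewrite in_setU => /orP [H|H];
      [apply: (subsetP sphi) | apply: (subsetP spsi)].
  move=> y; rewrite /compose /= in_setU => Hy a a' Ha.
  case Hpsi: (y \in pdom psi); first by apply: dpsi.
  by rewrite Hpsi /= orbF in Hy; apply: dphi.
move=> C HC [l [Hl]]; rewrite /compose /= in_setU => Hl1 a.
case: (boolP [exists l, (l \in C) && (l.1 \in pdom psi)]).
  move=> /existsP [l' /andP [Hl' Hl'1]].
  have [l2 [Hl2 E]] := apsi C HC (ex_intro _ l' (conj Hl' Hl'1)) (subst_val phi a).
  exists l2; split => //; rewrite key.
  case Hp: (l2.1 \in pdom psi) => //.
  by move: E; rewrite /subst_val Hp.
move=> /existsPn Hn.
have Hphi : l.1 \in pdom phi.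
  case/orP: Hl1 => // H; by move: (Hn l); rewrite Hl H.
have [l2 [Hl2 E]] := aphi C HC (ex_intro _ l (conj Hl Hphi)) a.
exists l2; split => //; rewrite key.
by move: (Hn l2); rewrite Hl2 /= => /negbTE ->.
Qed.
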